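(* Let $n$ be a positive integer, let $u:2^{[n]}\to\mathbb{R}_{\ge 0}$ be a normalized ($u(\emptyset)=0$), monotone, submodular set function, and let $c:2^{[n]}\to\mathbb{R}_{\ge 0}$ be given by $c(S)=\sum_{i\in S}c_i$ for positive costs $c_1,\dots,c_n>0$. Then any permutation of $[n]$ that orders the elements $i\in[n]$ in non-decreasing order of $c(\{i\})$ is an $n$-approximate solution to Min-Sum Submodular Cover on $(u,c)$; that is, its objective value is at most $n$ times the minimum objective value over all permutations of $[n]$.
   Context: $[n]=\{1,\dots,n\}$. Min-Sum Submodular Cover on $(u,c)$: find a permutation of $[n]$ minimizing $\sum_{i=1}^n c(S_i)\,(u(S_i)-u(S_{i-1}))$, where $S_i$ is the set of the first $i$ elements of the permutation and $S_0=\emptyset$. A set function $u$ is monotone if $u(S\cup\{i\})\ge u(S)$ and submodular if $u(S\cup\{i\})-u(S)\ge u(S\cup\{i,j\})-u(S\cup\{j\})$ for all $S\subseteq[n]$, $i,j\notin S$. *)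

(* Defs.v *)
(* Ground set [n] is represented by 'I_n (elements 0..n-1). *)
From mathcomp Require Import all_boot all_order all_algebra all_fingroup.
Set Implicit Arguments. Unset Strict Implicit. Unset Printing Implicit Defensive.
Import Order.TTheory GRing.Theory Num.Theory.
Local Open Scope ring_scope.

Definition prefix (n : nat) (s : 'S_n) (k : nat) : {set 'I_n} :=
  [set s j | j : 'I_n & (j < k)%N].

Definition mssc_obj (R : numDomainType) (n : nat)
  (u c : {set 'I_n} -> R) (s : 'S_n) : R :=
  \sum_(i < n) c (prefix s i.+1) * (u (prefix s i.+1) - u (prefix s i)).

Definition normalized (R : numDomainType) (n : nat) (u : {set 'I_n} -> R) :=
  u set0 = 0.

Definition monotone_sf (R : numDomainType) (n : nat) (u : {set 'I_n} -> R) :=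
  forall (S : {set 'I_n}) (i : 'I_n), u S <= u (i |: S).

Definition submodular_sf (R : numDomainType) (n : nat) (u : {set 'I_n} -> R) :=
  forall (S : {set 'I_n}) (i j : 'I_n), i \notin S -> j \notin S ->
    u (i |: S) - u S >= u (i |: (j |: S)) - u (j |: S).

Definition add_cost (R : numDomainType) (n : nat) (ci : 'I_n -> R)
  : {set 'I_n} -> R := fun S => \sum_(i in S) ci i.

(* Main.v *)
Require Import Defs.
From mathcomp Require Import all_boot all_order all_algebra all_fingroup.
Import Order.TTheory GRing.Theory Num.Theory.
Local Open Scope ring_scope.
Local Notation prefix := Defs.prefix.

Lemma abel (R : pzRingType) (a f : nat -> R) (m : nat) : a 0%N = 0 ->
  \sum_(k < m) a k.+1 * (f k.+1 - f k) =
  \sum_(k < m) (a k.+1 - a k) * (f m - f k).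
Proof.
move=> a0; elim: m => [|m IH]; first by rewrite !big_ord0.
rewrite big_ord_recr /= IH.
have tel : \sum_(k < m.+1) (a k.+1 - a k) = a m.+1.
  by rewrite -(big_mkord xpredT (fun k => a k.+1 - a k)) telescope_sumr // a0 subr0.
have -> : \sum_(k < m.+1) (a k.+1 - a k) * (f m.+1 - f k) =
   \sum_(k < m.+1) (a k.+1 - a k) * (f m.+1 - f m) +
   \sum_(k < m.+1) (a k.+1 - a k) * (f m - f k).
  by rewrite -big_split /=; apply: eq_bigr => k _; rewrite -mulrDr addrA subrK.
by rewrite -mulr_suml tel big_ord_recr /= subrr mulr0 addr0 addrC.
Qed.

Section S.
Variables (R : realFieldType) (n : nat) (u : {set 'I_n} -> R).
Hypothesis u_mono : monotone_sf u.

Lemma mono_sub (S T : {set 'I_n}) : S \subset T -> u S <= u T.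
Proof.
move=> sST.
have H : forall (l : seq 'I_n) S, u S <= u (S :|: [set x in l]).
  elim=> [|x l IH] S0.
    have -> : [set x in [::]] = set0 :> {set 'I_n} by apply/setP=> y; rewrite !inE.
    by rewrite setU0.
  have -> : [set y in x :: l] = x |: [set y in l] by apply/setP=> y; rewrite !inE.
  rewrite setUCA; apply: le_trans (IH S0) (u_mono _ _).
have := H (enum T) S.
have -> : [set x in enum T] = T by apply/setP=> y; rewrite !inE mem_enum.
by move/setUidPr: sST => ->.
Qed.
End S.

Lemma prefix_full (n : nat) (s : 'S_n) : prefix s n = setT.
Proof.
apply/setP=> x; rewrite inE; apply/imsetP; exists ((s^-1)%g x); first by rewrite inE ltn_ord.
by rewrite permKV.
Qed.

Lemma prefix_mem (n : nat) (s : 'S_n) k x : (x \in prefix s k) = ((s^-1)%g x < k)%N.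
Proof.
apply/imsetP/idP => [[j]|H]; first by rewrite inE => jk ->; rewrite permK.
by exists ((s^-1)%g x); rewrite ?inE ?permKV.
Qed.

Lemma prefix0 (n : nat) (s : 'S_n) : prefix s 0 = set0.
Proof. by apply/setP=> x; rewrite prefix_mem inE. Qed.

Lemma prefixS (n : nat) (s : 'S_n) (k : 'I_n) : prefix s k.+1 = s k |: prefix s k.
Proof.
apply/setP=> x; rewrite !inE !prefix_mem ltnS leq_eqVlt.
case: (eqVneq x (s k)) => [->|ne]; first by rewrite permK !eqxx.
rewrite orFb; case: eqP => //= E; case/eqP: ne.
by rewrite -[x](permKV s); congr (s _); apply: val_inj.
Qed.

Lemma prefix_notin (n : nat) (s : 'S_n) (k : 'I_n) : s k \notin prefix s k.
Proof. by rewrite prefix_mem permK ltnn. Qed.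

Theorem theorem3 (R : realFieldType) (n : nat) (n_pos : (0 < n)%N)
  (u : {set 'I_n} -> R) (ci : 'I_n -> R)
  (u_ge0 : forall S, 0 <= u S)
  (u_norm : normalized u) (u_mono : monotone_sf u) (u_sub : submodular_sf u)
  (ci_pos : forall i, 0 < ci i)
  (s : 'S_n)
  (s_sorted : forall j k : 'I_n, (j <= k)%N ->
     add_cost ci [set s j] <= add_cost ci [set s k]) :
  forall t : 'S_n,
    mssc_obj u (add_cost ci) s <= n%:R * mssc_obj u (add_cost ci) t.
Proof.
move=> t.
destruct n as [|n]; first by [].
pose U := u setT.
pose a := fun k : nat => if k is k'.+1 then ci (s (inord k')) else 0.
pose d := fun k : nat => a k.+1 - a k.
have d_ge0 : forall k : 'I_n.+1, 0 <= d k.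
  case=> [[|k] Hk]; rewrite /d /a /=; first by rewrite subr0 ltW.
  rewrite subr_ge0; have := s_sorted (inord k) (inord k.+1).
  rewrite /add_cost !big_set1; apply.
  by rewrite !inordK // ltnW.
have w_ge0 : forall T, 0 <= U - u T.
  by move=> T; rewrite subr_ge0; apply: mono_sub => //; apply: subsetT.
have step1 : mssc_obj u (add_cost ci) s <=
    n.+1%:R * \sum_(i < n.+1) ci (s i) * (u (prefix s i.+1) - u (prefix s i)).
  rewrite /mssc_obj mulr_sumr; apply: ler_sum => i _; rewrite mulrA.
  apply: ler_wpM2r.
    by rewrite subr_ge0; apply: mono_sub => //; apply/subsetP => x; rewrite !prefix_mem => H; apply: ltnW.
  rewrite /add_cost.
  apply: (@le_trans _ _ (\sum_(x in prefix s i.+1) ci (s i))).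
    apply: ler_sum => x; rewrite prefix_mem ltnS => H.
    have := s_sorted _ _ H; rewrite /add_cost !big_set1 permKV; apply.
  rewrite sumr_const mulrC -[X in X <= _]mulr_natr; apply: ler_wpM2l; first exact: ltW.
  by rewrite ler_nat; apply: leq_trans (max_card _) _; rewrite card_ord.
have step2 : \sum_(i < n.+1) ci (s i) * (u (prefix s i.+1) - u (prefix s i)) =
    \sum_(k < n.+1) d k * (U - u (prefix s k)).
  transitivity (\sum_(k < n.+1) a k.+1 * ((fun k => u (prefix s k)) k.+1 - (fun k => u (prefix s k)) k)).
    by apply: eq_bigr => i _; rewrite /a inord_val.
  by rewrite (abel _ a (fun k => u (prefix s k))) // prefix_full.
have step3 : mssc_obj u (add_cost ci) t =
    \sum_(j < n.+1) ci (t j) * (U - u (prefix t j)).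
  rewrite /mssc_obj.
  have := abel _ (fun k => add_cost ci (prefix t k)) (fun k => u (prefix t k)) n.+1.
  rewrite /= => ->; last by rewrite prefix0 /add_cost big_set0.
  apply: eq_bigr => j _; rewrite prefix_full prefixS /add_cost big_setU1 ?prefix_notin //.
  by rewrite addrK.
have cidec : forall j : 'I_n.+1, ci (t j) = \sum_(k < n.+1 | (k < ((s^-1)%g (t j)).+1)%N) d k.
  move=> j; rewrite -big_ord_widen // -(big_mkord xpredT d).
  rewrite (telescope_sumr a) // /a /= subr0 inord_val permKV //.
have step4 : \sum_(k < n.+1) d k * (U - u (prefix s k)) <=
    \sum_(j < n.+1) ci (t j) * (U - u (prefix t j)).
  under [X in _ <= X]eq_bigr => j _ do rewrite cidec mulr_suml big_mkcond.
  rewrite exchange_big /=; apply: ler_sum => k _.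
  have Pj1 : (k <= (s^-1)%g (t ((t^-1)%g (s k))))%N by rewrite permKV permK.
  case: (@arg_minnP _ ((t^-1)%g (s k)) (fun j : 'I_n.+1 => k <= (s^-1)%g (t j))%N (fun j : 'I_n.+1 => nat_of_ord j) Pj1) => j0 Pj0 minj0.
  rewrite (bigD1 j0) //= ltnS Pj0.
  apply: (@le_trans _ _ (d k * (U - u (prefix t j0)))).
    apply: ler_wpM2l; first exact: d_ge0.
    rewrite lerD2l lerN2; apply: mono_sub => //; apply/subsetP => x.
    rewrite !prefix_mem => H; rewrite ltnNge; apply/negP => Hk.
    have := minj0 ((t^-1)%g x); rewrite permKV => /(_ Hk).
    by rewrite leqNgt H.
  rewrite lerDl; apply: sumr_ge0 => j _; case: ifP => // _.
  by apply: mulr_ge0; [exact: d_ge0 | exact: w_ge0].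
apply: le_trans step1 _; rewrite step2 step3.
by apply: ler_wpM2l => //; rewrite ler0n.
Qed.
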